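(* Let $M\ge1$, $\beta,\hat\beta>0$, and suppose $$\beta^{-1}<1+(M-1)\,m_0(\hat\beta)^2 .$$ Then $\mathbf{p}=\mathbf{0}$ is not a global maximizer of $$g(\mathbf{p};\hat\beta,\beta)=\log2-\frac{\beta|\mathbf{p}|^2}{2}+\big\langle\log\cosh(\beta\,\mathbf{s}\cdot\mathbf{p})\big\rangle_{\mathbf{s},\hat\beta},\qquad\mathbf{p}\in\mathbb{R}^M,$$ the scalar equation $p=\big\langle s_1\tanh\big(\beta p\sum_{\mu=1}^M s_\mu\big)\big\rangle_{\mathbf{s},\hat\beta}$ has exactly one solution $\bar p>0$, and $\mathbf{p}=\pm\bar p\,\mathbf{1}$ are solutions of $\mathbf{p}=\langle\mathbf{s}\tanh(\beta\,\mathbf{s}\cdot\mathbf{p})\rangle_{\mathbf{s},\hat\beta}$.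
   Context: $m_0(\hat\beta)$ is the largest nonnegative solution of $m=\tanh(\hat\beta m)$. $\langle\cdot\rangle_{\mathbf{s},\hat\beta}$ denotes expectation over $\mathbf{s}=(s_1,\dots,s_M)\in\{-1,1\}^M$ with i.i.d. entries of mean $m_0(\hat\beta)$. *)

(* Defs.v *)
From mathcomp Require Import all_boot all_order all_algebra.
From mathcomp Require Import all_classical all_reals all_analysis.
Set Implicit Arguments. Unset Strict Implicit. Unset Printing Implicit Defensive.
Import Order.TTheory GRing.Theory Num.Theory.
Local Open Scope ring_scope.
Local Open Scope classical_set_scope.

Section Defs.
Variable R : realType.

Definition cosh (x : R) : R := (expR x + expR (- x)) / 2.
Definition tanh (x : R) : R := (expR x - expR (- x)) / (expR x + expR (- x)).

Definition m0 (bh : R) : R := sup [set m : R | 0 <= m /\ m = tanh (bh * m)].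

Definition spin (b : bool) : R := if b then 1 else -1.

(* <f(s)>_{s,bh}: s in {-1,1}^M with i.i.d. entries of mean m0 bh,
   i.e. P(s_i = +-1) = (1 +- m0 bh)/2 *)
Definition avg (M : nat) (bh : R) (f : {ffun 'I_M -> bool} -> R) : R :=
  \sum_(s : {ffun 'I_M -> bool})
     (\prod_(i < M) ((1 + m0 bh * spin (s i)) / 2)) * f s.

Definition sdot (M : nat) (s : {ffun 'I_M -> bool}) (p : 'I_M -> R) : R :=
  \sum_(i < M) spin (s i) * p i.

Definition gfun (M : nat) (bh b : R) (p : 'I_M -> R) : R :=
  ln 2 - b * (\sum_(i < M) p i ^+ 2) / 2
  + avg bh (fun s => ln (cosh (b * sdot s p))).

End Defs.
Arguments spin {R} b.
Arguments cosh {R} x.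
Arguments tanh {R} x.

(* Main.v *)
Require Import Defs.
From mathcomp Require Import all_boot all_order all_algebra.
From mathcomp Require Import all_classical all_reals all_analysis.
From mathcomp Require Import ring lra perm.
Import Order.TTheory GRing.Theory Num.Theory.
Local Open Scope ring_scope.

Module Helpers.
Import numFieldNormedType.Exports.
Section T.
Local Open Scope classical_set_scope.
Import numFieldNormedType.Exports.
Context {R : realType}.
Implicit Types x y : R.

Lemma expN_mul x : expR x * expR (- x) = 1.
Proof. by rewrite -expRD subrr expR0. Qed.

Lemma tanhE x : tanh x = (expR x ^+ 2 - 1) / (expR x ^+ 2 + 1).
Proof.
rewrite /tanh expRN; have h := expR_gt0 x.
have h1 : expR x != 0 by rewrite gt_eqF.
have h2 : expR x ^+ 2 + 1 != 0 by rewrite gt_eqF // ltr_wpDl // sqr_ge0.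
have h3 : expR x + (expR x)^-1 != 0 by rewrite gt_eqF // ltr_wpDl ?invr_gt0 // ltW.
field.
by rewrite h1 h2.
Qed.

Lemma tanhN x : tanh (- x) = - tanh x.
Proof. rewrite /tanh opprK -mulNr opprB; congr (_ / _); exact: addrC. Qed.

Lemma tanh0 : tanh (0:R) = 0.
Proof. by rewrite /tanh oppr0 subrr mul0r. Qed.

Lemma tanh_ge0 x : 0 <= x -> 0 <= tanh x.
Proof.
move=> hx; rewrite tanhE.
have h : 1 <= expR x by rewrite -expR0 ler_expR.
have h2 : 1 <= expR x ^+ 2 by rewrite exprn_ege1.
apply: divr_ge0; lra.
Qed.

Lemma tanh_le1 x : tanh x <= 1.
Proof.
rewrite tanhE; have h : 0 <= expR x ^+ 2 by rewrite sqr_ge0.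
rewrite ler_pdivrMr; lra.
Qed.

Lemma tanh_ge_N1 x : -1 <= tanh x.
Proof. by rewrite lerNl -tanhN tanh_le1. Qed.

Lemma tanh_lb x : 0 <= x -> x / (1 + x) <= tanh x.
Proof.
move=> hx; rewrite tanhE.
have h2 : 1 + (x + x) <= expR x ^+ 2 by rewrite expr2 -expRD expR_ge1Dx.
set e := expR x ^+ 2 in h2 *.
rewrite ler_pdivrMr; last lra.
rewrite mulrAC ler_pdivlMr; last lra.
nra.
Qed.

Lemma tanh_lt x y : x < y -> tanh x < tanh y.
Proof.
move=> hxy; rewrite !tanhE.
have hx := expR_gt0 x.
have h : expR x < expR y by rewrite ltr_expR.
have h' : expR x ^+ 2 < expR y ^+ 2 by rewrite !expr2; nra.
have h0 : 0 <= expR x ^+ 2 by rewrite sqr_ge0.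
set a := expR x ^+ 2 in h' h0 *; set b := expR y ^+ 2 in h' *.
rewrite ltr_pdivrMr; last lra.
rewrite mulrAC ltr_pdivlMr; last lra.
nra.
Qed.


Lemma is_derive_expN x : is_derive x 1 (fun y : R => expR (- y)) (- expR (- x)).
Proof.
have h0 : is_derive x 1 (-%R : R -> R) (-1) := is_deriveNid x 1.
have h := @is_derive1_comp R expR -%R x (expR (- x)) (-1) (is_derive_expR _) h0.
rewrite mulrN1 in h; exact: h.
Qed.

Lemma is_derive_tanh x : is_derive x 1 (@tanh R) (1 - tanh x ^+ 2).
Proof.
have hN := is_derive_expN x.
have hD : is_derive x 1 (fun y : R => expR y + expR (- y)) (expR x - expR (- x)).
  exact: (is_deriveD (is_derive_expR x) hN).
have hB : is_derive x 1 (fun y : R => expR y - expR (- y)) (expR x + expR (- x)).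
  have := is_deriveB (is_derive_expR x) hN; rewrite opprK; exact.
have hpos : 0 < expR x + expR (- x) by rewrite addr_gt0 // expR_gt0.
have hne : expR x + expR (- x) != 0 by rewrite gt_eqF.
have hV := @is_deriveV R (fun y : R => expR y + expR (- y)) x _ 1 hne hD.
have hM := is_deriveM hB hV.
rewrite /tanh.
set F := (fun x0 : R => _).
have -> : F = ((fun y => expR y - expR (- y)) *
       (fun y : numFieldNormedType.Real_sort__canonical__normed_module_NormedModule R =>
        (expR y + expR (- y))^-1)) by apply/funext.
apply: (is_derive_eq hM).
rewrite /GRing.scale /=.
set a := expR x; set b := expR (- x).
have hab : a + b != 0 by [].
field; exact: hab.
Qed.

Lemma tanh_cont (a b : R) : {within `[a, b], continuous (@tanh R)}.
Proof.
apply: derivable_within_continuous => z _.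
by case: (is_derive_tanh z).
Qed.

Lemma tanh_concave (a b : R) : 0 < a -> a < b -> a * tanh b < b * tanh a.
Proof.
move=> ha hab.
have [c1 hc1 e1] := MVT ha (fun z _ => is_derive_tanh z) (tanh_cont 0 a).
have [c2 hc2 e2] := MVT hab (fun z _ => is_derive_tanh z) (tanh_cont a b).
move: hc1 hc2; rewrite !in_itv /= => /andP[h1 h1'] /andP[h2 h2'].
have t12 : tanh c1 < tanh c2 by apply: tanh_lt; lra.
have t1 : 0 <= tanh c1 by apply: tanh_ge0; lra.
rewrite tanh0 subr0 subr0 in e1.
have ed : 1 - tanh c2 ^+ 2 < 1 - tanh c1 ^+ 2 by rewrite !expr2; nra.
set d1 := 1 - tanh c1 ^+ 2 in e1 ed; set d2 := 1 - tanh c2 ^+ 2 in e2 ed.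
have eb : tanh b = tanh a + d2 * (b - a) by rewrite -e2; ring.
rewrite eb e1.
have hp : 0 < a * (b - a) by apply: mulr_gt0; lra.
nra.
Qed.

Lemma tanh_continuous : continuous (@tanh R).
Proof.
move=> x; apply/differentiable_continuous/derivable1_diffP.
by case: (is_derive_tanh x).
Qed.

Lemma term_cont (c k : R) : continuous (fun p : R => c * tanh (k * p)).
Proof.
move=> x.
apply: (continuous_comp (f := fun p : R => tanh (k * p)) (g := *%R c)).
- apply: (continuous_comp (f := *%R k) (g := @tanh R)).
  + exact: mulrl_continuous.
  + exact: tanh_continuous.
- exact: mulrl_continuous.
Qed.

Lemma sum_cont (T : finType) (c k : T -> R) :
  continuous (fun p : R => \sum_(t : T) c t * tanh (k t * p)).
Proof.
apply: (continuous_big (op := +%R) (x0 := 0)).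
  exact: add_continuous.
move=> t _; exact: term_cont.
Qed.
End T.


Section Comb.
Context {R : realType}.
Variable M : nat.
Variable m : R.

Definition wt (s : {ffun 'I_M -> bool}) : R := \prod_(i < M) ((1 + m * spin (s i)) / 2).
Definition avgm (f : {ffun 'I_M -> bool} -> R) : R := \sum_s wt s * f s.
Definition Ssum (s : {ffun 'I_M -> bool}) : R := \sum_(mu < M) spin (s mu).

Lemma avgD f g : avgm (fun s => f s + g s) = avgm f + avgm g.
Proof. by rewrite /avgm -big_split; apply: eq_bigr => s _; rewrite mulrDr. Qed.

Lemma avgZ c f : avgm (fun s => c * f s) = c * avgm f.
Proof. by rewrite /avgm mulr_sumr; apply: eq_bigr => s _; rewrite mulrCA. Qed.

Lemma avgN f : avgm (fun s => - f s) = - avgm f.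
Proof. by rewrite /avgm -sumrN; apply: eq_bigr => s _; rewrite mulrN. Qed.

Lemma avg_sum (I : finType) (F : I -> {ffun 'I_M -> bool} -> R) :
  avgm (fun s => \sum_(i : I) F i s) = \sum_(i : I) avgm (F i).
Proof.
rewrite /avgm; under eq_bigr do rewrite mulr_sumr.
exact: exchange_big.
Qed.

Lemma avg_prod (phi : 'I_M -> bool -> R) :
  avgm (fun s => \prod_(i < M) phi i (s i)) =
  \prod_(i < M) \sum_(b : bool) ((1 + m * spin b) / 2 * phi i b).
Proof.
rewrite bigA_distr_bigA /avgm; apply: eq_bigr => s _.
by rewrite /wt [RHS]big_split.
Qed.

Lemma avg1 : avgm (fun _ => 1) = 1.
Proof.
have := avg_prod (fun _ _ => 1).
rewrite big1_eq => ->.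
rewrite big1 // => i _.
rewrite big_bool /= /spin; lra.
Qed.


Lemma spin2 b : spin b * spin b = 1 :> R.
Proof. by case: b; rewrite /spin ?mulr1 ?mulrNN ?mulr1. Qed.

Lemma prod_pick (F : 'I_M -> R) (i : 'I_M) :
  \prod_(k < M) (if k == i then F k else 1) = F i.
Proof. by rewrite -big_mkcond big_pred1_eq. Qed.

Lemma avg_pair (i j : 'I_M) :
  avgm (fun s => spin (s i) * spin (s j)) =
  m ^+ 2 + (if j == i then 1 - m ^+ 2 else 0).
Proof.
case: eqP => [->|/eqP hij].
  have -> : (fun s : {ffun 'I_M -> bool} => spin (s i) * spin (s i) : R) = (fun _ => 1).
    by apply: boolp.funext => s; exact: spin2.
  by rewrite avg1; ring.
have := avg_prod (fun k b => (if k == i then spin b else 1) * (if k == j then spin b else 1) : R).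
rewrite /=.
have -> : (fun s : {ffun 'I_M -> bool} =>
   \prod_(k < M) ((if k == i then spin (s k) else 1) * (if k == j then spin (s k) else 1)) : R)
   = (fun s => spin (s i) * spin (s j)).
  apply: boolp.funext => s; rewrite big_split /=.
  by rewrite (prod_pick (fun k => spin (s k))) (prod_pick (fun k => spin (s k))).
move=> ->.
rewrite (eq_bigr (fun k => (if k == i then m else 1) * (if k == j then m else 1))).
  by rewrite big_split /= (prod_pick (fun => m)) (prod_pick (fun => m)) expr2 addr0.
move=> k _.
rewrite big_bool /= /spin.
case: (eqVneq k i) => [->|hki].
  by rewrite eq_sym (negbTE hij); lra.
by case: (k == j); lra.
Qed.

Lemma avg_S2 : avgm (fun s => Ssum s ^+ 2) = M%:R * (1 + (M%:R - 1) * m ^+ 2).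
Proof.
have -> : (fun s => Ssum s ^+ 2) =
   (fun s => \sum_(i < M) \sum_(j < M) spin (s i) * spin (s j)).
  apply: boolp.funext => s; rewrite /Ssum expr2 mulr_suml.
  by apply: eq_bigr => i _; rewrite mulr_sumr.
rewrite avg_sum.
under eq_bigr do rewrite avg_sum.
under eq_bigr do under eq_bigr do rewrite avg_pair.
have e : forall i : 'I_M, \sum_(j < M) (m ^+ 2 + (if j == i then 1 - m ^+ 2 else 0))
    = M%:R * m ^+ 2 + (1 - m ^+ 2).
  move=> i; rewrite big_split /= sumr_const card_ord -big_mkcond big_pred1_eq.
  by rewrite mulr_natl.
under eq_bigr do rewrite e.
rewrite sumr_const card_ord -mulr_natl; ring.
Qed.


Lemma avg_exch (i i0 : 'I_M) (h : R -> R) :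
  avgm (fun s => spin (s i) * h (Ssum s)) = avgm (fun s => spin (s i0) * h (Ssum s)).
Proof.
pose sg := tperm i i0.
pose phi (s : {ffun 'I_M -> bool}) : {ffun 'I_M -> bool} := [ffun k => s (sg k)].
have phi_inj : injective phi.
  move=> s1 s2 /ffunP e; apply/ffunP => k; have := e (sg k).
  by rewrite !ffunE tpermK.
rewrite /avgm (reindex_inj phi_inj); apply: eq_bigr => s _.
have wE : wt (phi s) = wt s.
  rewrite /wt; under eq_bigr do rewrite ffunE.
  by rewrite [RHS](reindex_inj (@perm_inj _ sg)).
have SE : Ssum (phi s) = Ssum s.
  rewrite /Ssum; under eq_bigr do rewrite ffunE.
  by rewrite [RHS](reindex_inj (@perm_inj _ sg)).
by rewrite wE SE ffunE tpermL.
Qed.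

Lemma avg_sym (i0 : 'I_M) (h : R -> R) :
  M%:R * avgm (fun s => spin (s i0) * h (Ssum s)) = avgm (fun s => Ssum s * h (Ssum s)).
Proof.
have -> : (fun s => Ssum s * h (Ssum s)) =
  (fun s => \sum_(i < M) spin (s i) * h (Ssum s)).
  by apply: boolp.funext => s; rewrite /Ssum mulr_suml.
rewrite avg_sum (eq_bigr (fun _ => avgm (fun s => spin (s i0) * h (Ssum s)))).
  by rewrite sumr_const card_ord mulr_natl.
by move=> i _; rewrite (avg_exch i i0).
Qed.

Lemma avg_le f g : -1 <= m <= 1 -> (forall s, f s <= g s) -> avgm f <= avgm g.
Proof.
move=> /andP[h1 h2] fg; apply: ler_sum => s _; apply: ler_wpM2l => //.
apply: prodr_ge0 => k _; apply: divr_ge0 => //.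
by rewrite /spin; case: (s k); lra.
Qed.

Lemma wt_true : -1 < m -> 0 < wt [ffun => true].
Proof.
move=> h1; apply: prodr_gt0 => k _; apply: divr_gt0 => //.
by rewrite ffunE /spin; lra.
Qed.

Lemma Ssum_true : Ssum [ffun => true] = M%:R.
Proof.
by rewrite /Ssum (eq_bigr (fun _ => 1)) ?sumr_const ?card_ord // => k _; rewrite ffunE.
Qed.

Lemma Ssum_norm s : `|Ssum s| <= M%:R.
Proof.
rewrite /Ssum; apply: le_trans (ler_norm_sum _ _ _) _.
rewrite (eq_bigr (fun _ => 1)) ?sumr_const ?card_ord //.
by move=> k _; rewrite /spin; case: (s k); rewrite ?normrN normr1.
Qed.

End Comb.


Section Pw.
Context {R : realType}.
Implicit Types x y k : R.

Lemma ytanh_abs y k : y * tanh (k * y) = `|y| * tanh (k * `|y|).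
Proof.
case: (lerP 0 y) => hy; first by rewrite ger0_norm.
by rewrite ltr0_norm // mulrN tanhN mulrNN.
Qed.

Lemma ytanh_ge0 y k : 0 <= k -> 0 <= y * tanh (k * y).
Proof.
move=> hk; rewrite ytanh_abs; apply: mulr_ge0 => //.
by apply: tanh_ge0; apply: mulr_ge0.
Qed.

Lemma ytanh_le y k : y * tanh (k * y) <= `|y|.
Proof.
rewrite ytanh_abs; have := tanh_le1 (k * `|y|); have := normr_ge0 y; nra.
Qed.

Lemma ytanh_lb y k (Mx : R) : 0 <= k -> `|y| <= Mx ->
  k / (1 + k * Mx) * y ^+ 2 <= y * tanh (k * y).
Proof.
move=> hk hy; rewrite ytanh_abs.
have ha := normr_ge0 y.
have hky : 0 <= k * `|y| by apply: mulr_ge0.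
have := tanh_lb _ hky.
have hkM : k * `|y| <= k * Mx by apply: ler_wpM2l.
set t := tanh _ => ht.
have e : y ^+ 2 = `|y| * `|y| by rewrite -expr2 real_normK ?num_real.
rewrite e.
have h1 : 0 < 1 + k * `|y| by lra.
have h2 : 0 < 1 + k * Mx by lra.
have h3 : k / (1 + k * Mx) <= k / (1 + k * `|y|).
  by apply: ler_wpM2l => //; rewrite lef_pV2 ?posrE //; lra.
have h4 : k * `|y| / (1 + k * `|y|) = k / (1 + k * `|y|) * `|y| by rewrite mulrAC.
rewrite h4 in ht.
rewrite mulrA mulrC.
apply: (@le_trans _ _ (`|y| * (k / (1 + k * `|y|) * `|y|))).
  by apply: ler_wpM2l => //; apply: ler_wpM2r.
by apply: ler_wpM2l.
Qed.

Lemma ytanh_dec y b q p : 0 < b -> 0 < q -> q < p ->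
  y * tanh (b * p * y) * q <= y * tanh (b * q * y) * p /\
  (y != 0 -> y * tanh (b * p * y) * q < y * tanh (b * q * y) * p).
Proof.
move=> hb hq hqp.
have key : y != 0 -> y * tanh (b * p * y) * q < y * tanh (b * q * y) * p.
  move=> hy; rewrite (ytanh_abs y (b * p)) (ytanh_abs y (b * q)).
  have ha : 0 < `|y| by rewrite normr_gt0.
  have hA : 0 < b * q * `|y| by apply: mulr_gt0 => //; apply: mulr_gt0.
  have hAB : b * q * `|y| < b * p * `|y| by rewrite ltr_pM2r // ltr_pM2l.
  have := tanh_concave _ _ hA hAB.
  set u := tanh (b * p * _); set v := tanh (b * q * _) => h.
  have hbq : 0 < b * `|y| by rewrite mulr_gt0.
  have : q * u < p * v.
    rewrite -(ltr_pM2l hbq); move: h; rewrite !mulrA.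
    by rewrite (mulrAC b q) (mulrAC b p).
  by move=> h'; rewrite -(mulrA `|y| u q) -(mulrA `|y| v p) ltr_pM2l // (mulrC u) (mulrC v).
split => //.
case: (eqVneq y 0) => [->|/key/ltW //]; by rewrite !mul0r.
Qed.

Lemma lncosh_lb x d : `|x| <= d -> d < 1 -> x ^+ 2 * (1 - d) ^+ 2 / 2 <= ln (cosh x).
Proof.
move=> hx hd.
have ce : cosh x = cosh `|x|.
  case: (lerP 0 x) => h; first by rewrite ger0_norm.
  by rewrite ltr0_norm // /cosh opprK addrC.
have e2 : x ^+ 2 = `|x| ^+ 2 by rewrite real_normK ?num_real.
rewrite ce e2.
set t := `|x| in hx *.
have ht : 0 <= t by rewrite normr_ge0.
have hE := expR_ge1Dx t.
have hE' := expR_ge1Dx (- t).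
have hEE : expR t * expR (- t) = 1 by rewrite -expRD subrr expR0.
have hp := expR_gt0 (- t).
set E := expR t in hE hEE *; set E' := expR (- t) in hE' hEE hp *.
rewrite /cosh -/E -/E'.
set C := (E + E') / 2.
have hC1 : 1 <= C.
  rewrite /C; have : 0 <= (E - 1) ^+ 2 * E' by apply: mulr_ge0 => //; [exact: sqr_ge0 | lra].
  have : (E - 1) ^+ 2 * E' = E * (E * E') - 2 * (E * E') + E' by ring.
  rewrite hEE; lra.
have hCpos : 0 < C by lra.
have hln : 1 - C^-1 <= ln C.
  have hCi0 : 0 < C^-1 by rewrite invr_gt0.
  have hv : -1 < C^-1 - 1 by lra.
  have := le_ln1Dx hv; rewrite addrC subrK lnV ?posrE //; lra.
have hC2 : t ^+ 2 * (1 - t) / 2 <= C - 1.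
  have h0 : t ^+ 2 <= (E - 1) ^+ 2 by rewrite !expr2; nra.
  have : (E - 1) ^+ 2 * E' = E * (E * E') - 2 * (E * E') + E' by ring.
  rewrite hEE /C => h.
  have : t ^+ 2 * (1 - t) <= (E - 1) ^+ 2 * E'.
    apply: (@le_trans _ _ ((E - 1) ^+ 2 * (1 - t))).
      by apply: ler_wpM2r => //; lra.
    by apply: ler_wpM2l => //; exact: sqr_ge0.
  lra.
have hC3 : C * (1 - t) <= 1.
  have hE'E : E' <= E by rewrite /E /E' ler_expR; lra.
  rewrite /C; nra.
have hCi : 1 - t <= C^-1 by rewrite -(ler_pM2l hCpos) mulrV ?unitfE ?gt_eqF //.
have h1t : 0 <= 1 - t by lra.
apply: (le_trans _ hln).
have -> : 1 - C^-1 = (C - 1) * C^-1 by rewrite mulrBl mulrV ?unitfE ?gt_eqF // mul1r.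
have hd2 : (1 - d) ^+ 2 <= (1 - t) ^+ 2 by rewrite !expr2; nra.
have h6 : t ^+ 2 * (1 - t) / 2 * (1 - t) <= (C - 1) * C^-1.
  apply: (@le_trans _ _ ((C - 1) * (1 - t))).
    by apply: ler_wpM2r.
  by apply: ler_wpM2l => //; lra.
have ht2 : 0 <= t ^+ 2 by exact: sqr_ge0.
nra.
Qed.

End Pw.

Import numFieldNormedType.Exports.

Section G.
Context {R : realType}.
Variables (M : nat) (m b : R).
Hypothesis hm : -1 <= m <= 1.

Definition Gf (p : R) : R :=
  avgm M m (fun s => Ssum M s * tanh (b * p * Ssum M s)).

Lemma avg_cst c : avgm M m (fun _ => c) = c.
Proof.
transitivity (avgm M m (fun s => c * 1)).
  by apply: eq_bigr => s _; rewrite mulr1.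
by rewrite avgZ avg1 mulr1.
Qed.

Lemma Gf_le p : Gf p <= M%:R.
Proof.
rewrite -[leRHS](avg_cst M%:R); apply: avg_le => // s.
exact: le_trans (ytanh_le _ _) (Ssum_norm _ _).
Qed.

Lemma Gf_lb p : 0 <= p -> 0 < b ->
  b * p / (1 + b * p * M%:R) * (M%:R * (1 + (M%:R - 1) * m ^+ 2)) <= Gf p.
Proof.
move=> hp hb; rewrite -avg_S2 -avgZ; apply: avg_le => // s.
apply: ytanh_lb; first by apply: mulr_ge0 => //; apply: ltW.
exact: Ssum_norm.
Qed.

Lemma Gf_cont : continuous Gf.
Proof.
have -> : Gf = (fun p => \sum_(s : {ffun 'I_M -> bool})
    (wt M m s * Ssum M s) * tanh ((b * Ssum M s) * p)).
  apply: boolp.funext => p; rewrite /Gf /avgm; apply: eq_bigr => s _.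
  by rewrite mulrA (mulrAC b).
exact: sum_cont.
Qed.

Lemma avg_lt f g (s0 : {ffun 'I_M -> bool}) : (forall s, f s <= g s) ->
  f s0 < g s0 -> 0 < wt M m s0 -> avgm M m f < avgm M m g.
Proof.
move=> fg fg0 w0; rewrite /avgm (bigD1 s0) //= [ltRHS](bigD1 s0) //=.
apply: ltr_leD; first by rewrite ltr_pM2l.
apply: ler_sum => s _; apply: ler_wpM2l => //.
case/andP: hm => h1 h2.
apply: prodr_ge0 => k _; apply: divr_ge0 => //.
by rewrite /spin; case: (s k); lra.
Qed.

Lemma Gf_strict q p : (0 < M)%N -> -1 < m -> 0 < b -> 0 < q -> q < p ->
  Gf p * q < Gf q * p.
Proof.
move=> hM hm1 hb hq hqp.
have eZ : forall (f : {ffun 'I_M -> bool} -> R) c,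
    avgm M m f * c = avgm M m (fun s => f s * c).
  move=> f c; rewrite mulrC -avgZ; apply: eq_bigr => s _; by rewrite (mulrC c).
rewrite /Gf !eZ.
apply: (@avg_lt _ _ [ffun => true]).
- move=> s; by case: (ytanh_dec (Ssum M s) _ _ _ hb hq hqp).
- case: (ytanh_dec (Ssum M [ffun => true]) _ _ _ hb hq hqp) => _; apply.
  by rewrite Ssum_true pnatr_eq0 -lt0n.
- exact: wt_true.
Qed.

End G.


Section M0.
Context {R : realType}.
Local Open Scope classical_set_scope.
Lemma m0_bounds (bh : R) : 0 <= m0 bh <= 1.
Proof.
set A := [set m : R | 0 <= m /\ m = tanh (bh * m)].
have A0 : A 0 by split => //; rewrite mulr0 tanh0.
have ub : ubound A 1 by move=> x [_ ->]; exact: tanh_le1.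
have hs : has_sup A by split; [exists 0 | exists 1].
apply/andP; split.
- exact: (sup_upper_bound hs A0).
- by apply: ge_sup => //; exists 0.
Qed.
End M0.

Section Ex.
Context {R : realType}.
Import numFieldNormedType.Exports.
Local Open Scope classical_set_scope.

Lemma exists_fix (M : nat) (m b : R) : (0 < M)%N -> -1 <= m <= 1 -> 0 < b ->
  1 < b * (1 + (M%:R - 1) * m ^+ 2) -> b * (1 + (M%:R - 1) * m ^+ 2) <= b * M%:R ->
  exists2 p, 0 < p & Gf M m b p / M%:R = p.
Proof.
move=> hM hm hb hc hcM.
set K := 1 + (M%:R - 1) * m ^+ 2 in hc hcM.
set c := b * K in hc hcM.
have hMp : 0 < M%:R :> R by rewrite ltr0n.
set p0 := (c - 1) / (2 * b * M%:R).
have hbM : 0 < 2 * b * M%:R by rewrite !mulr_gt0.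
have hp0 : 0 < p0 by rewrite divr_gt0 // subr_gt0.
have et : b * p0 * M%:R = (c - 1) / 2.
  by rewrite /p0; field; rewrite ?gt_eqF.
have hp02 : p0 <= 2.
  rewrite /p0 ler_pdivrMr //; nra.
pose g := (fun p => Gf M m b p / M%:R) - id.
have gc : continuous g.
  move=> x; apply: continuousB; last exact: cvg_id.
  apply: continuousM; first exact: Gf_cont.
  exact: cvg_cst.
have g2 : g 2 < 0.
  rewrite /g /= subr_lt0; apply: (@le_lt_trans _ _ 1); last lra.
  by rewrite ler_pdivrMr // mul1r Gf_le.
have gp0 : 0 < g p0.
  rewrite /g /= subr_gt0.
  have hL := Gf_lb M m b hm p0 (ltW hp0) hb.
  rewrite ltr_pdivlMr //; apply: lt_le_trans hL.
  have eL : b * p0 / (1 + b * p0 * M%:R) * (M%:R * K) = p0 * M%:R * (2 * c / (c + 1)).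
    rewrite et /c; field.
    rewrite gt_eqF //; rewrite -/c; lra.
  rewrite eL ltr_pMr; last exact: mulr_gt0.
  by rewrite ltr_pdivlMr; lra.
have [|x hx gx] := @IVT R g p0 2 0 hp02 (continuous_subspaceT gc).
  by rewrite ge_min le_max (ltW g2) (ltW gp0) orbT.
exists x.
  move: hx; rewrite in_itv /= => /andP[h1 _]; lra.
by move: gx; rewrite /g /= => /eqP; rewrite subr_eq0 => /eqP.
Qed.
End Ex.


Lemma cosh0 {R : realType} : cosh (0 : R) = 1.
Proof. rewrite /cosh oppr0 expR0; lra. Qed.

Lemma gfun_improve {R : realType} (M : nat) (b bh : R) : (0 < M)%N -> 0 < b ->
  1 < b * (1 + (M%:R - 1) * m0 bh ^+ 2) ->
  exists p : 'I_M -> R, gfun bh b (fun _ : 'I_M => 0 : R) < gfun bh b p.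
Proof.
move=> hM hb hc.
have hm : -1 <= m0 bh <= 1 by case/andP: (m0_bounds bh) => h1 h2; apply/andP; split; lra.
set m := m0 bh in hm hc *.
set K := 1 + (M%:R - 1) * m ^+ 2 in hc *.
set c := b * K in hc.
have hMp : 0 < M%:R :> R by rewrite ltr0n.
set d := (c - 1) / (4 * c).
have hd0 : 0 < d by apply: divr_gt0; lra.
have hcd : c * d = (c - 1) / 4 by rewrite /d; field; rewrite gt_eqF //; lra.
have hd1 : d < 1.
  have : c * d < c * 1 by rewrite hcd; lra.
  by rewrite ltr_pM2l; lra.
set e := d / (b * M%:R).
have he : 0 < e by rewrite divr_gt0 // mulr_gt0.
have hbe : b * e * M%:R = d.
  by rewrite /e; field; rewrite !gt_eqF.
exists (fun _ => e).
have G0 : gfun bh b (fun _ : 'I_M => 0 : R) = ln 2.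
  rewrite /gfun.
  have -> : \sum_(i < M) (0:R) ^+ 2 = 0 by apply: big1 => i _; rewrite expr2 mulr0.
  have -> : avg bh (fun s => ln (cosh (b * sdot s (fun _ : 'I_M => 0 : R)))) = 0.
    rewrite /avg big1 // => s _.
    have -> : sdot s (fun _ : 'I_M => 0 : R) = 0 by rewrite /sdot big1 // => i _; rewrite mulr0.
    by rewrite mulr0 cosh0 ln1 mulr0.
  by rewrite mulr0 mul0r subr0 addr0.
rewrite G0 /gfun.
have ES : \sum_(i < M) e ^+ 2 = e ^+ 2 * M%:R by rewrite sumr_const card_ord mulr_natr.
rewrite ES.
set cf := (b * e) ^+ 2 * (1 - d) ^+ 2 / 2.
have hA : cf * (M%:R * K) <= avg bh (fun s : {ffun 'I_M -> bool} => ln (cosh (b * sdot s (fun _ => e)))).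
  rewrite -(avg_S2 M m) -avgZ.
  change (avgm M m (fun s => cf * Ssum M s ^+ 2) <=
          avgm M m (fun s => ln (cosh (b * sdot s (fun _ => e))))).
  apply: avg_le => // s.
  have eS : b * sdot s (fun _ => e) = b * e * Ssum M s.
    rewrite /sdot /Ssum -mulrA; congr (_ * _); rewrite mulr_sumr; apply: eq_bigr => i _; by rewrite mulrC.
  rewrite eS.
  have := lncosh_lb (b * e * Ssum M s) d _ hd1.
  have -> : (b * e * Ssum M s) ^+ 2 * (1 - d) ^+ 2 / 2 = cf * Ssum M s ^+ 2.
    by rewrite /cf; ring.
  apply.
  rewrite normrM -hbe (ger0_norm (x := b * e)); last by apply: mulr_ge0; lra.
  apply: ler_wpM2l; first by apply: mulr_ge0; lra.
  exact: Ssum_norm.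
have key : 1 < c * (1 - d) ^+ 2.
  have : c * (1 - d) ^+ 2 = c - 2 * (c * d) + (c * d) * d by ring.
  have : 0 <= c * d * d by apply: mulr_ge0; [apply: mulr_ge0|]; lra.
  rewrite hcd; lra.
suff : 0 < - (b * (e ^+ 2 * M%:R) / 2) + cf * (M%:R * K) by lra.
have -> : - (b * (e ^+ 2 * M%:R) / 2) + cf * (M%:R * K)
   = (b * e ^+ 2 * M%:R / 2) * (c * (1 - d) ^+ 2 - 1) by rewrite /cf /c; ring.
apply: mulr_gt0; last lra.
apply: divr_gt0 => //; apply: mulr_gt0 => //; apply: mulr_gt0 => //.
exact: exprn_gt0.
Qed.

Lemma sdotE {R : realType} (M : nat) (s : {ffun 'I_M -> bool}) (b p : R) :
  b * sdot s (fun _ => p) = b * p * Ssum M s.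
Proof.
rewrite /sdot /Ssum -mulrA; congr (_ * _); rewrite mulr_sumr.
by apply: eq_bigr => i _; rewrite mulrC.
Qed.

Lemma GfN {R : realType} (M : nat) (m b p : R) : Gf M m b (- p) = - Gf M m b p.
Proof.
rewrite /Gf -avgN; apply: eq_bigr => s _.
by rewrite mulrN mulNr tanhN mulrN mulrN.
Qed.


End Helpers.
Import Helpers.

Theorem mainTheorem7 (R : realType) (M : nat) (hM : (0 < M)%N) (b bh : R)
  (hb : 0 < b) (hbh : 0 < bh)
  (hcond : b^-1 < 1 + (M%:R - 1) * m0 bh ^+ 2) :
  (exists p : 'I_M -> R, gfun bh b (fun _ : 'I_M => 0) < gfun bh b p) /\
  (exists pbar : R,
     [/\ 0 < pbar,
         pbar = avg bh (fun s => spin (s (Ordinal hM)) *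
                          tanh (b * pbar * \sum_(mu < M) spin (s mu))),
         (forall q : R, 0 < q ->
            q = avg bh (fun s => spin (s (Ordinal hM)) *
                          tanh (b * q * \sum_(mu < M) spin (s mu))) ->
            q = pbar),
         (forall i : 'I_M, pbar = avg bh (fun s => spin (s i) *
                          tanh (b * sdot s (fun _ => pbar)))) &
         (forall i : 'I_M, - pbar = avg bh (fun s => spin (s i) *
                          tanh (b * sdot s (fun _ => - pbar))))]).
Proof.
have hm01 := m0_bounds bh.
have hm : -1 <= m0 bh <= 1 by case/andP: hm01 => h1 h2; apply/andP; split; lra.
have hm1 : -1 < m0 bh by case/andP: hm01 => h1 h2; lra.
have hc : 1 < b * (1 + (M%:R - 1) * m0 bh ^+ 2).
  have h := hcond; rewrite -(ltr_pM2l hb) in h; rewrite divff ?gt_eqF // in h.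
split; first exact: gfun_improve.
set m := m0 bh in hm hm1 hc *.
have hMp : 0 < M%:R :> R by rewrite ltr0n.
have hM1 : 1 <= M%:R :> R by rewrite ler1n.
have hcM : b * (1 + (M%:R - 1) * m ^+ 2) <= b * M%:R.
  apply: ler_wpM2l; first exact: ltW.
  have : m ^+ 2 <= 1 by rewrite expr2; case/andP: hm01 => h1 h2; nra.
  nra.
have [pbar hp hfix] := exists_fix M m b hM hm hb hc hcM.
set i0 := Ordinal hM.
have E : forall (i : 'I_M) p, avg bh (fun s => spin (s i) * tanh (b * sdot s (fun _ => p)))
    = Gf M m b p / M%:R.
  move=> i p.
  set A := avgm M m (fun s => spin (s i0) * tanh (b * p * Ssum M s)).
  have h : M%:R * A = Gf M m b p by exact: (avg_sym M m i0 (fun y => tanh (b * p * y))).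
  transitivity A; last by rewrite -h; field; rewrite gt_eqF.
  transitivity (avgm M m (fun s => spin (s i) * tanh (b * p * Ssum M s))).
    by apply: eq_bigr => s _; rewrite sdotE.
  exact: (avg_exch M m i i0 (fun y => tanh (b * p * y))).
have f0E : forall p, avg bh (fun s => spin (s i0) * tanh (b * p * \sum_(mu < M) spin (s mu)))
    = Gf M m b p / M%:R.
  move=> p; rewrite -(E i0); apply: eq_bigr => s _.
  by rewrite sdotE.
exists pbar; split => //.
- by rewrite f0E hfix.
- move=> q hq; rewrite f0E => hqf.
  have eq1 : Gf M m b q = q * M%:R by rewrite {2}hqf; field; rewrite gt_eqF.
  have eq2 : Gf M m b pbar = pbar * M%:R by rewrite -{2}hfix; field; rewrite gt_eqF.
  case: (ltgtP q pbar) => // hlt.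
  + have := Gf_strict M m b hm q pbar hM hm1 hb hq hlt; rewrite eq1 eq2.
    have -> : pbar * M%:R * q = q * M%:R * pbar by ring.
    by rewrite ltxx.
  + have := Gf_strict M m b hm pbar q hM hm1 hb hp hlt; rewrite eq1 eq2.
    have -> : q * M%:R * pbar = pbar * M%:R * q by ring.
    by rewrite ltxx.
- by move=> i; rewrite E hfix.
- by move=> i; rewrite E GfN mulNr hfix.
Qed.
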